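(* Let $\pi\in S_n$. The set of source cells of $\beta_\pi$ is exactly $\{B_{i,\pi(i)}:1\le i\le n\}$, where $B_{i,j}$ denotes the 4-cell of $G$ with top $c_i\vee d_j$.
   Context: $G$ is the direct product of chains $0=c_0\prec\dots\prec c_n$ and $0=d_0\prec\dots\prec d_n$, elements written $c_i\vee d_j$. For $i,j\ge1$, $B_{i,j}=\{c_{i-1}\vee d_{j-1},c_{i-1}\vee d_j,c_i\vee d_{j-1},c_i\vee d_j\}$. For a join-congruence $\alpha$ (equivalence compatible with $\vee$), $B_{i,j}$ is a source cell of $\alpha$ if $c_{i-1}\vee d_j$, $c_i\vee d_{j-1}$, $c_i\vee d_j$ lie in one $\alpha$-class not containing $c_{i-1}\vee d_{j-1}$. For $\pi\in S_n$, $\beta_\pi$ is the join, in the lattice of join-congruences of $(G;\vee)$, of the smallest join-congruences collapsing $\{c_{i-1}\vee d_{\pi(i)},c_i\vee d_{\pi(i)-1},c_i\vee d_{\pi(i)}\}$, $i=1,\dots,n$. *)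

(* Defs.v *)
From mathcomp Require Import all_boot all_fingroup.
Set Implicit Arguments. Unset Strict Implicit. Unset Printing Implicit Defensive.

(* G = direct product of chains 0=c_0<...<c_n and 0=d_0<...<d_n.
   The element c_a \/ d_b is represented by the pair (a, b). *)
Definition G (n : nat) : finType := ('I_n.+1 * 'I_n.+1)%type.

(* c_a \/ d_b, for a, b <= n (inord truncates nothing in that range) *)
Definition cd (n a b : nat) : G n := (inord a, inord b).

Definition gjoin n (x y : G n) : G n :=
  (inord (maxn x.1 y.1), inord (maxn x.2 y.2)).

Definition join_congruence n (R : G n -> G n -> Prop) : Prop :=
  [/\ (forall x, R x x),
      (forall x y, R x y -> R y x),
      (forall x y z, R x y -> R y z -> R x z) &
      (forall x y z, R x y -> R (gjoin x z) (gjoin y z))].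

Definition source_cell n (R : G n -> G n -> Prop) (a b : nat) : Prop :=
  R (cd n a.-1 b) (cd n a b) /\ R (cd n a b.-1) (cd n a b) /\
  ~ R (cd n a.-1 b.-1) (cd n a b).

(* beta_pi: the least join-congruence collapsing, for each i = 1..n, the
   triple {c_{i-1} \/ d_{pi(i)}, c_i \/ d_{pi(i)-1}, c_i \/ d_{pi(i)}}.
   Index i : 'I_n stands for i+1, and pi(i+1) = (pi i)+1. *)
Definition beta n (pi : {perm 'I_n}) (x y : G n) : Prop :=
  forall R : G n -> G n -> Prop, join_congruence R ->
    (forall i : 'I_n,
       R (cd n i (pi i).+1) (cd n i.+1 (pi i).+1) /\
       R (cd n i.+1 (pi i)) (cd n i.+1 (pi i).+1)) ->
    R x y.

(* Main.v *)
Require Import Defs.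
From mathcomp Require Import all_boot all_fingroup.
From mathcomp Require Import zify.
Set Implicit Arguments. Unset Strict Implicit.

Definition hh n (pi : {perm 'I_n}) (i : 'I_n) (x : G n) : bool :=
  (i < x.1)%N || (pi i < x.2)%N.

Lemma hh_join n (pi : {perm 'I_n}) i (x z : G n) :
  hh pi i (gjoin x z) = hh pi i x || hh pi i z.
Proof.
rewrite /hh /gjoin /= !inordK ?ltnS ?geq_max ?leq_ord ?ltn_ord // !leq_max.
by case: (i < x.1)%N; case: (i < z.1)%N; case: (pi i < x.2)%N; case: (pi i < z.2)%N.
Qed.

Lemma cd1 n (a b : nat) : (a <= n)%N -> ((cd n a b).1 : nat) = a.
Proof. by move=> h; rewrite /cd /= inordK. Qed.
Lemma cd2 n (a b : nat) : (b <= n)%N -> ((cd n a b).2 : nat) = b.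
Proof. by move=> h; rewrite /cd /= inordK. Qed.

Lemma beta_hh n (pi : {perm 'I_n}) i x y : beta pi x y -> hh pi i x = hh pi i y.
Proof.
move=> H; apply: (H (fun x y => hh pi i x = hh pi i y)).
  split.
  - by [].
  - by move=> ? ? ->.
  - by move=> ? ? ? -> ->.
  - by move=> ? ? ? e; rewrite !hh_join e.
move=> k; have hk := ltn_ord k; have hpk := ltn_ord (pi k).
rewrite /hh !cd1 ?cd2 //; try lia.
have ne1 : k <> i -> (k : nat) <> i by move=> ne /val_inj.
have ne2 : pi k <> pi i -> (pi k : nat) <> pi i by move=> ne /val_inj.
split.
  have [->|ne] := eqVneq k i; first by apply/idP/idP => /orP h'; apply/orP; lia.
  have := ne1 (elimN eqP ne) => h.
  by apply/idP/idP => /orP h'; apply/orP; lia.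
have [e|ne] := eqVneq (pi k) (pi i).
  by move/perm_inj: e => ->; apply/idP/idP => /orP h'; apply/orP; lia.
have := ne2 (elimN eqP ne) => h.
by apply/idP/idP => /orP h'; apply/orP; lia.
Qed.

Theorem lemma4p8 (n : nat) (pi : {perm 'I_n}) :
  forall i j : 'I_n,
    source_cell (beta pi) i.+1 j.+1 <-> j = pi i.
Proof.
move=> i j; have hi := ltn_ord i; have hj := ltn_ord j; have hpi := ltn_ord (pi i).
split.
  case=> H1 [H2 H3] /=; have [//|ne] := eqVneq j (pi i); exfalso; apply: H3.
  have e := beta_hh i H1.
  move: e; rewrite /hh /= !cd1 ?cd2 //; try lia.
  rewrite ltnn /= ltnSn /= ltnS => lij.
  have lt : (pi i < j)%N.
    by rewrite ltn_neqAle lij andbT; apply: contra ne => /eqP/val_inj ->.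
  move=> R jc gen.
  case: (jc) => _ _ tr cmp.
  apply: (tr _ (cd n i.+1 j)); last by apply: H2.
  have := cmp _ _ (cd n 0 j) (proj1 (gen i)).
  have -> : gjoin (cd n i (pi i).+1) (cd n 0 j) = cd n i j.
    by apply/eqP; rewrite /gjoin /cd xpair_eqE /= -!val_eqE /= !inordK //; try lia;
       rewrite !inordK //; try lia; apply/andP; split; apply/eqP; lia.
  have -> : gjoin (cd n i.+1 (pi i).+1) (cd n 0 j) = cd n i.+1 j.
    by apply/eqP; rewrite /gjoin /cd xpair_eqE /= -!val_eqE /= !inordK //; try lia;
       rewrite !inordK //; try lia; apply/andP; split; apply/eqP; lia.
  by [].
move=> ->; split; last split.
- by move=> R jc gen; exact: (proj1 (gen i)).
- by move=> R jc gen; exact: (proj2 (gen i)).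
- move=> /(beta_hh i); rewrite /hh /= !cd1 ?cd2 //; try lia.
Qed.
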